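(* For every $N\in\mathbb{N}$, $\Delta_{\ell_\infty^N}^{(c)}(R)=R$ for all $R\in[0,\infty)$.
   Context: $\ell_\infty^N$ is $\mathbb{R}^N$ with the max norm. For a cover $\mathcal{U}$ of a metric space $X$: $\mathrm{diam}(\mathcal{U})=\sup_{U\in\mathcal{U}}\mathrm{diam}(U)$; $\mathcal{L}(\mathcal{U})=\sup\{d\in[0,\infty): \text{every } E\subseteq X \text{ with } \mathrm{diam}(E)<d \text{ is contained in some } U\in\mathcal{U}\}$; point-finite means each point lies in only finitely many members. $\Delta_X^{(c)}(R)=\inf\{\mathrm{diam}(\mathcal{U}): \mathcal{U} \text{ point-finite cover of } X,\ \mathcal{L}(\mathcal{U})\geq R\}$. *)

(* Defs.v *)
From mathcomp Require Import all_boot all_order all_algebra.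
From mathcomp Require Import all_classical all_reals ereal.
Set Implicit Arguments. Unset Strict Implicit. Unset Printing Implicit Defensive.
Import Order.TTheory GRing.Theory Num.Theory.
Local Open Scope classical_set_scope.
Local Open Scope ring_scope.

Section Defs.
Variable R : realType.

Definition linf_dist (N : nat) (x y : 'I_N -> R) : R :=
  \big[Num.max/0]_(i < N) `|x i - y i|.

Variable T : Type.
Variable d : T -> T -> R.

(* diameter of a set (convention diam(empty) = 0); value in [0, +oo] *)
Definition diam (E : set T) : \bar R :=
  ereal_sup ([set 0%E] `|` [set (d x y)%:E | x in E & y in E]).

Definition is_cover (U : set (set T)) : Prop := \bigcup_(A in U) A = setT.

Definition point_finite (U : set (set T)) : Prop :=
  forall x : T, finite_set [set A | U A /\ A x].

Definition cover_diam (U : set (set T)) : \bar R :=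
  ereal_sup [set diam A | A in U].

Definition lebesgue_number (U : set (set T)) : \bar R :=
  ereal_sup [set r%:E | r in [set r : R | 0 <= r /\
     forall E : set T, (diam E < r%:E)%E -> exists2 A, U A & E `<=` A]].

Definition Delta_c (r : R) : \bar R :=
  ereal_inf [set cover_diam U | U in [set U | is_cover U /\ point_finite U /\
                                      (r%:E <= lebesgue_number U)%E]].
End Defs.

(* Main.v *)
Require Import Defs.
From mathcomp Require Import all_boot all_order all_algebra.
From mathcomp Require Import all_classical all_reals ereal.
From mathcomp Require Import lra zify.
Import Order.TTheory GRing.Theory Num.Theory.
Local Open Scope classical_set_scope.
Local Open Scope ring_scope.

Section Aux.
Variable R : realType.
Variable N : nat.
Local Notation T := ('I_N -> R).
Local Notation d := (@linf_dist R N).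

Lemma le_dist (x y : T) i : `|x i - y i| <= d x y.
Proof. exact: (le_bigmax _ (fun i => `|x i - y i|)). Qed.

Lemma dist_le (x y : T) c : 0 <= c -> (forall i, `|x i - y i| <= c) -> d x y <= c.
Proof. by move=> c0 H; apply: bigmax_le. Qed.

Lemma diam_ge0 (E : set T) : (0 <= diam d E)%E.
Proof. by apply: ereal_sup_ubound; left. Qed.

Lemma diam_ub (E : set T) x y : E x -> E y -> ((d x y)%:E <= diam d E)%E.
Proof. by move=> Ex Ey; apply: ereal_sup_ubound; right; exists x => //; exists y. Qed.

Lemma diam_le (E : set T) c : 0 <= c ->
  (forall x y, E x -> E y -> d x y <= c) -> (diam d E <= c%:E)%E.
Proof.
move=> c0 H; apply: ge_ereal_sup => z [->|[x Ex [y Ey <-]]].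
  by rewrite lee_fin.
by rewrite lee_fin; apply: H.
Qed.

Definition box (δ r : R) (k : 'I_N -> int) : set T :=
  [set x | forall i, (k i)%:~R * δ <= x i < (k i)%:~R * δ + r + δ].

Definition Ucov (δ r : R) : set (set T) := [set A | exists k, A = box δ r k].

Lemma Ucov_cover δ r : 0 < δ -> 0 <= r -> is_cover (Ucov δ r).
Proof.
move=> d0 r0; apply/seteqP; split => // x _.
exists (box δ r (fun i => Num.floor (x i / δ))); first by eexists.
move=> i /=; have /andP[h1 h2] := floor_itv (x i / δ).
rewrite ler_pdivlMr // in h1; rewrite ltr_pdivrMr // in h2.
rewrite h1 /=; rewrite intrD mulrDl mul1r in h2; lra.
Qed.

Lemma Ucov_diam δ r : 0 < δ -> 0 <= r -> (cover_diam d (Ucov δ r) <= (r + δ)%:E)%E.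
Proof.
move=> d0 r0; apply: ge_ereal_sup => z [A [k ->] <-].
apply: diam_le; first lra.
move=> x y Hx Hy; apply: dist_le; first lra.
move=> i; have /andP[h1 h2] := Hx i; have /andP[h3 h4] := Hy i.
set t := _ * δ in h1 h2 h3 h4.
rewrite ler_norml; apply/andP; split; lra.
Qed.

Lemma Ucov_pf δ r : 0 < δ -> 0 <= r -> point_finite (Ucov δ r).
Proof.
move=> d0 r0 x.
pose M := Num.Def.archi_bound (r / δ + 1).
have hM : r / δ + 1 < M%:R by apply: archi_boundP; rewrite addr_ge0 // divr_ge0 // ltW.
pose g (j : {ffun 'I_N -> 'I_M.+1}) :=
  box δ r (fun i => Num.floor (x i / δ) - ((j i : nat) : int)).
apply: (@sub_finite_set _ _ [set g j | j in [set: {ffun 'I_N -> 'I_M.+1}]]);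
  last by apply: finite_image; exact: finite_finset.
move=> A [[k ->] Hx].
exists [ffun i => inord (absz (Num.floor (x i / δ) - k i))] => //.
rewrite /g; congr box; apply: funext => i; rewrite ffunE.
have /andP[h1 h2] := Hx i.
have hk : k i <= Num.floor (x i / δ).
  by rewrite floor_ge_int_tmp ler_pdivlMr.
have hm : ((Num.floor (x i / δ) - k i)%:~R : R) < M%:R.
  rewrite intrD intrN; apply: le_lt_trans hM.
  have := floor_le_tmp (x i / δ).
  have : x i / δ < (k i)%:~R + r / δ + 1.
    rewrite ltr_pdivrMr // !mulrDl mul1r -mulrA mulVf ?mulr1 //; last by rewrite gt_eqF.
  lra.
have hm' : Num.floor (x i / δ) - k i < M%:Z.
  by rewrite -(ltr_int R); rewrite [X in _ < X](_ : _ = (M%:R : R)) //.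
rewrite inordK; first lia.
lia.
Qed.

Lemma Ucov_leb δ r : 0 < δ -> 0 <= r -> (r%:E <= lebesgue_number d (Ucov δ r))%E.
Proof.
move=> d0 r0; apply: ereal_sup_ubound; exists r => //; split => // E hE.
have hd : forall x y, E x -> E y -> d x y < r.
  by move=> x y Ex Ey; rewrite -lte_fin; apply: le_lt_trans hE; apply: diam_ub.
have [->|/set0P[e0 Ee0]] := eqVneq E set0.
  by exists (box δ r (fun=> 0)); [eexists| move=> ? []].
pose a i := inf [set x i | x in E].
have hlb : forall i, has_lbound [set x i | x in E].
  move=> i; exists (e0 i - r) => _ [y Ey <-].
  have := hd _ _ Ee0 Ey; have := le_dist e0 y i.
  rewrite ler_norml => /andP[_ ?]; lra.
exists (box δ r (fun i => Num.floor (a i / δ))); first by eexists.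
move=> x Ex i.
have h1 : a i <= x i by apply: (ge_inf (hlb i)); exists x.
have h2 : x i - r <= a i.
  apply: lb_le_inf; first by exists (x i), x.
  move=> _ [y Ey <-].
  have := hd _ _ Ex Ey; have := le_dist x y i.
  rewrite ler_norml => /andP[_ ?]; lra.
have /andP[h3 h4] := floor_itv (a i / δ).
rewrite ler_pdivlMr // in h3; rewrite ltr_pdivrMr // intrD mulrDl mul1r in h4.
apply/andP; split; lra.
Qed.

Lemma lower (U : set (set T)) r : (0 < N)%N -> 0 <= r -> is_cover U ->
  (r%:E <= lebesgue_number d U)%E -> (r%:E <= cover_diam d U)%E.
Proof.
move=> N0 r0 cov leb.
have cd0 : (0 <= cover_diam d U)%E.
  have : setT (fun _ : 'I_N => (0:R)) by [].
  rewrite -cov => -[A UA _]; apply: le_trans (diam_ge0 A) _.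
  by apply: ereal_sup_ubound; exists A.
apply/lee_addgt0Pr => e e0.
have [re|er] := leP r e.
  by apply: le_trans _ (leeD2r _ cd0); rewrite add0e lee_fin.
pose s := r - e.
have s0 : 0 < s by rewrite /s subr_gt0.
have : (s%:E < lebesgue_number d U)%E.
  by apply: lt_le_trans leb; rewrite lte_fin /s; lra.
move=> /ereal_sup_gt[_ [t [t0 Ht] <-]]; rewrite lte_fin => st.
pose a : T := fun=> 0; pose b : T := fun=> s.
have [A UA sub] : exists2 A, U A & [set a; b] `<=` A.
  apply: Ht; apply: le_lt_trans (_ : (s%:E < t%:E)%E); last by rewrite lte_fin.
  apply: diam_le; first lra.
  move=> x y [->|->] [->|->]; apply: dist_le; try lra;
    move=> i; rewrite /a /b /= ?subrr ?normr0 ?sub0r ?subr0 ?normrN ?ger0_norm //; lra.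
have : (s%:E <= cover_diam d U)%E.
  apply: (@le_trans _ _ (diam d A)); last by apply: ereal_sup_ubound; exists A.
  have Ha : A a by apply: sub; left.
  have Hb : A b by apply: sub; right.
  apply: (@le_trans _ _ (d a b)%:E); last exact: diam_ub Ha Hb.
  rewrite lee_fin; apply: le_trans (le_dist a b (Ordinal N0)).
  by rewrite /a /b sub0r normrN ger0_norm // ltW.
move=> /(leeD2r e%:E); apply: le_trans; rewrite -EFinD lee_fin /s; lra.
Qed.

End Aux.

Theorem proposition4p5 (R : realType) (N : nat) : (0 < N)%N ->
  forall r : R, 0 <= r ->
    Delta_c (@linf_dist R N) r = r%:E.
Proof.
move=> N0 r r0; apply: le_anti; apply/andP; split.
  apply/lee_addgt0Pr => e e0; apply: ge_ereal_inf.
  exists (cover_diam (@linf_dist R N) (@Ucov R N e r)).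
    exists (@Ucov R N e r) => //; split; first exact: Ucov_cover.
    by split; [exact: Ucov_pf | exact: Ucov_leb].
  by rewrite -EFinD; apply: Ucov_diam.
apply: le_ereal_inf_tmp => _ [U [cov [pf leb]] <-].
exact: lower.
Qed.
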